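(* Let $\lambda\in(\frac16,\frac56)$ and $x\in[0,1]\setminus\mathcal E$. Suppose there is a finite $p\ge0$ with $\beta_{1,2}(x,p)=0$ and $\beta_{1,2}(x,p+1)=1$. Then $m_0(x)=\dots=m_p(x)=0$, $m_{p+1}(x)=6\lambda$ if $u_p(x)=1$ and $m_{p+1}(x)=-6\lambda$ if $u_p(x)=2$, and for all $n\ge p+1$: $m_{n+1}(x)=m_n(x)$ if $u_n(x)\in\{0,3\}$; $m_{n+1}(x)=\mathrm{sgn}(m_n(x))\big(|m_n(x)|+6\lambda\sqrt{1+m_n(x)^2}\big)$ if $u_n(x)=1$; $m_{n+1}(x)=\mathrm{sgn}(m_n(x))\big(|m_n(x)|-6\lambda\sqrt{1+m_n(x)^2}\big)$ if $u_n(x)=2$.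
   Context: Construction: $F^\lambda_0\equiv0$ on $[0,1]$ (one interval of generation $0$). Given $F^\lambda_n$ with its $4^n$ closed intervals of generation $n$ (covering $[0,1]$, disjoint interiors, $F^\lambda_n$ affine on each), on each interval $[a,b]$ of generation $n$, with $\ell=b-a$ and slope $m$, $F^\lambda_{n+1}$ coincides with $F^\lambda_n$ at $a,a+\ell/3,a+2\ell/3,b$, equals $F^\lambda_n(a+\ell/2)+\lambda\ell\sqrt{1+m^2}$ at $a+\ell/2$, and is affine on $[a,a+\ell/3],[a+\ell/3,a+\ell/2],[a+\ell/2,a+2\ell/3],[a+2\ell/3,b]$. Dynamics: $T(x)=3x$ on $[0,\frac13)$, $6x-2$ on $[\frac13,\frac12)$, $4-6x$ on $[\frac12,\frac23)$, $3x-2$ on $[\frac23,1]$; $U(x)=0,1,2,3$ on these intervals respectively; $u_n(x)=U(T^nx)$; $\beta_i(x,n)=\#\{k<n:u_k(x)=i\}$, $\beta_{1,2}=\beta_1+\beta_2$. $\mathcal E$ is the set of $x$ whose digit sequence $(u_n(x))$ is eventually constantly $0$ or eventually constantly $3$; for $x\notin\mathcal E$, $F^\lambda_n$ is differentiable at $x$ and $m_n(x)$ is its slope at $x$. *)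

(* Defs.v *)
From Stdlib Require Import Reals Lra List.
From Coquelicot Require Import Coquelicot.
Import ListNotations.
Open Scope R_scope.

(** * The functions F^lambda_n, represented by their list of nodes
    (x-coordinate, value) in increasing order of x; F^lambda_n is the
    piecewise-affine interpolation of its nodes. Consecutive nodes
    delimit the 4^n intervals of generation n. *)

Fixpoint refine (lam : R) (l : list (R * R)) : list (R * R) :=
  match l with
  | p :: ((q :: _) as t) =>
      let a := fst p in let ya := snd p in
      let b := fst q in let yb := snd q in
      let len := b - a in
      let m := (yb - ya) / len in
      p :: (a + len / 3, ya + m * (len / 3))
        :: (a + len / 2, ya + m * (len / 2) + lam * len * sqrt (1 + m ^ 2))
        :: (a + 2 * len / 3, ya + m * (2 * len / 3))
        :: refine lam t
  | _ => l
  end.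

Definition nodes (lam : R) (n : nat) : list (R * R) :=
  Nat.iter n (refine lam) [(0, 0); (1, 0)].

(** Piecewise-affine interpolation of a node list (only meaningful on [0,1]). *)
Fixpoint interp (l : list (R * R)) (x : R) : R :=
  match l with
  | p :: ((q :: _) as t) =>
      if Rle_dec x (fst q)
      then snd p + (snd q - snd p) / (fst q - fst p) * (x - fst p)
      else interp t x
  | _ => 0
  end.

Definition F (lam : R) (n : nat) (x : R) : R := interp (nodes lam n) x.

Definition slope (lam : R) (n : nat) (x : R) : R := Derive (F lam n) x.

Definition T (x : R) : R :=
  if Rlt_dec x (1/3) then 3 * x
  else if Rlt_dec x (1/2) then 6 * x - 2
  else if Rlt_dec x (2/3) then 4 - 6 * x
  else 3 * x - 2.

Definition U (x : R) : nat :=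
  if Rlt_dec x (1/3) then 0%nat
  else if Rlt_dec x (1/2) then 1%nat
  else if Rlt_dec x (2/3) then 2%nat
  else 3%nat.

Definition u (n : nat) (x : R) : nat := U (Nat.iter n T x).

Fixpoint beta (i : nat) (x : R) (n : nat) : nat :=
  match n with
  | O => O
  | S k => (beta i x k + (if Nat.eqb (u k x) i then 1 else 0))%nat
  end.

Definition beta12 (x : R) (n : nat) : nat := (beta 1 x n + beta 2 x n)%nat.

Definition inE (x : R) : Prop :=
  exists (N d : nat), (d = 0%nat \/ d = 3%nat) /\
    forall n, (N <= n)%nat -> u n x = d.

Definition sgn (r : R) : R :=
  if Rlt_dec 0 r then 1 else if Rlt_dec r 0 then -1 else 0.

(* Main.v *)
Require Import Defs.
From Stdlib Require Import Reals.
From Coquelicot Require Import Coquelicot.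
From Stdlib Require Import Lra Lia List Sorted.
Import ListNotations.
Open Scope R_scope.

Definition Rfst (p q : R * R) : Prop := fst p < fst q.

Lemma refine_cons2 lam p q t :
  refine lam (p :: q :: t) =
  let a := fst p in let ya := snd p in
  let b := fst q in let yb := snd q in
  let len := b - a in
  let m := (yb - ya) / len in
  p :: (a + len / 3, ya + m * (len / 3))
    :: (a + len / 2, ya + m * (len / 2) + lam * len * sqrt (1 + m ^ 2))
    :: (a + 2 * len / 3, ya + m * (2 * len / 3))
    :: refine lam (q :: t).
Proof. reflexivity. Qed.

Lemma refine_head lam q t : exists r, refine lam (q :: t) = q :: r.
Proof. destruct t as [|w t]. exists []; reflexivity. rewrite refine_cons2. eexists; reflexivity. Qed.

Lemma refine_app lam l1 p t : exists r1, refine lam (l1 ++ p :: t) = r1 ++ refine lam (p :: t).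
Proof.
  induction l1 as [|z l1 IH]. exists []; reflexivity.
  destruct IH as [r Hr].
  destruct l1 as [|w l1].
  - change ([z] ++ p :: t) with (z :: p :: t). rewrite refine_cons2. eexists (_ :: _ :: _ :: _ :: []). reflexivity.
  - change ((z :: w :: l1) ++ p :: t) with (z :: w :: (l1 ++ p :: t)).
    rewrite refine_cons2. simpl in Hr |- *. rewrite Hr.
    eexists (_ :: _ :: _ :: _ :: r). reflexivity.
Qed.

Lemma refine_sorted lam l : Sorted Rfst l -> Sorted Rfst (refine lam l).
Proof.
  induction l as [|p l IH]; intros H. simpl; auto.
  destruct l as [|q t]. simpl; auto.
  apply Sorted_inv in H as [H1 H2]. apply HdRel_inv in H2. unfold Rfst in H2.
  rewrite refine_cons2. cbv zeta.
  destruct (refine_head lam q t) as [r Hr].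
  specialize (IH H1). rewrite Hr in IH |- *.
  do 4 (apply Sorted_cons; [|constructor; unfold Rfst; simpl; lra]). exact IH.
Qed.

Lemma nodes_sorted lam n : Sorted Rfst (nodes lam n).
Proof.
  induction n. unfold nodes; simpl. repeat constructor. unfold Rfst; simpl; lra.
  unfold nodes in *. simpl. apply refine_sorted; auto.
Qed.

Lemma sorted_prefix l1 p t : Sorted Rfst (l1 ++ p :: t) -> forall z, In z l1 -> fst z < fst p.
Proof.
  intros H. apply Sorted_StronglySorted in H.
  2:{ intros a b c; unfold Rfst; lra. }
  induction l1 as [|w l1 IH]; simpl; [tauto|].
  apply StronglySorted_inv in H as [H1 H2]. intros z [<-|Hz]; auto.
  rewrite Forall_forall in H2. apply H2. apply in_app_iff; right; left; auto.
Qed.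

Lemma interp_cons2 (p q : R * R) (t : list (R * R)) (y : R) : Defs.interp (p :: q :: t) y =
  if Rle_dec y (fst q) then snd p + (snd q - snd p) / (fst q - fst p) * (y - fst p)
  else Defs.interp (q :: t) y.
Proof. reflexivity. Qed.

Lemma interp_app (l1 : list (R*R)) (p q : R * R) (l2 : list (R * R)) (y : R) : (forall z, In z l1 -> fst z < y) -> fst p < y -> y <= fst q ->
  Defs.interp (l1 ++ p :: q :: l2) y = snd p + (snd q - snd p)/(fst q - fst p) * (y - fst p).
Proof.
  intros H1 H2 H3. induction l1 as [|z l1 IH].
  - change ([] ++ p :: q :: l2) with (p :: q :: l2). rewrite interp_cons2. destruct Rle_dec; [auto|lra].
  - destruct l1 as [|w l1].
    + change ([z] ++ p :: q :: l2) with (z :: p :: q :: l2). rewrite interp_cons2. destruct Rle_dec; [lra|].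
      apply IH; simpl; tauto.
    + change ((z :: w :: l1) ++ p :: q :: l2) with (z :: w :: (l1 ++ p :: q :: l2)).
      rewrite interp_cons2. destruct Rle_dec.
      * assert (fst w < y) by (apply H1; simpl; auto). lra.
      * apply IH. intros; apply H1; simpl in *; tauto.
Qed.

Definition Inv lam x n a b ya yb (o : bool) : Prop :=
  a < b /\ (exists l1 l2, nodes lam n = l1 ++ (a,ya)::(b,yb)::l2) /\
  x = (if o then b - (b-a) * Nat.iter n T x else a + (b-a) * Nat.iter n T x).

Definition newo (d : nat) (o : bool) : bool := match d with 2%nat => negb o | _ => o end.
Definition newm lam (d : nat) (o : bool) (m s : R) : R :=
  match d with
  | 1%nat => if o then m - 6 * lam * s else m + 6 * lam * s
  | 2%nat => if o then m + 6 * lam * s else m - 6 * lam * s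
  | _ => m end.

Lemma nodes_S lam n : nodes lam (S n) = refine lam (nodes lam n).
Proof. reflexivity. Qed.

Lemma TU_cases t :
  (t < 1/3 /\ U t = 0%nat /\ T t = 3 * t) \/
  (1/3 <= t < 1/2 /\ U t = 1%nat /\ T t = 6 * t - 2) \/
  (1/2 <= t < 2/3 /\ U t = 2%nat /\ T t = 4 - 6 * t) \/
  (2/3 <= t /\ U t = 3%nat /\ T t = 3 * t - 2).
Proof.
  unfold U, T. destruct (Rlt_dec t (1/3)); [left; auto|].
  destruct (Rlt_dec t (1/2)); [right; left; repeat split; auto; lra|].
  destruct (Rlt_dec t (2/3)); [right; right; left; repeat split; auto; lra|].
  right; right; right; repeat split; auto; lra.
Qed.

Lemma step lam x n a b ya yb o m : Inv lam x n a b ya yb o -> m = (yb - ya) / (b - a) ->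
  exists a' b' ya' yb', Inv lam x (S n) a' b' ya' yb' (newo (u n x) o) /\
    (yb' - ya') / (b' - a') = newm lam (u n x) o m (sqrt (1 + m ^ 2)).
Proof.
  intros [Hab [[l1 [l2 Hl]] Hx]] Hm.
  destruct (refine_app lam l1 (a,ya) ((b,yb)::l2)) as [r1 Hr1].
  destruct (refine_head lam (b,yb) l2) as [r Hr].
  assert (HN : nodes lam (S n) = r1 ++ (a,ya) :: (a + (b-a)/3, ya + m * ((b-a)/3))
      :: (a + (b-a)/2, ya + m*((b-a)/2) + lam * (b-a) * sqrt (1 + m^2))
      :: (a + 2*(b-a)/3, ya + m * (2*(b-a)/3)) :: (b,yb) :: r).
  { rewrite nodes_S, Hl, Hr1, refine_cons2. cbv zeta. simpl fst; simpl snd. rewrite Hr, <- Hm. reflexivity. }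
  set (s := sqrt (1 + m^2)) in *.
  assert (Hl1 : b - a <> 0) by lra.
  unfold Inv. change (Nat.iter (S n) T x) with (T (Nat.iter n T x)).
  unfold u. set (t := Nat.iter n T x) in *.
  destruct (TU_cases t) as [[H1 [-> ->]]|[[H1 [-> ->]]|[[H1 [-> ->]]|[H1 [-> ->]]]]];
  destruct o; simpl newo; simpl newm.
  - exists (a + 2*(b-a)/3), b, (ya + m * (2*(b-a)/3)), yb. split; [split; [lra|split]|].
    + exists (r1 ++ [(a,ya); (a + (b-a)/3, ya + m * ((b-a)/3)); (a + (b-a)/2, ya + m*((b-a)/2) + lam * (b-a) * sqrt (1 + m^2))]), r.
      rewrite HN, <- app_assoc. reflexivity.
    + rewrite Hx at 1. field.
    + rewrite Hm. field. lra.
  - exists a, (a + (b-a)/3), ya, (ya + m * ((b-a)/3)). split; [split; [lra|split]|].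
    + exists r1, ((a + (b-a)/2, ya + m*((b-a)/2) + lam * (b-a) * sqrt (1 + m^2)) :: (a + 2*(b-a)/3, ya + m * (2*(b-a)/3)) :: (b,yb) :: r).
      rewrite HN. reflexivity.
    + rewrite Hx at 1. field.
    + field. lra.
  - exists (a + (b-a)/2), (a + 2*(b-a)/3), (ya + m*((b-a)/2) + lam * (b-a) * s), (ya + m * (2*(b-a)/3)). split; [split; [lra|split]|].
    + exists (r1 ++ [(a,ya); (a + (b-a)/3, ya + m * ((b-a)/3))]), ((b,yb) :: r).
      rewrite HN, <- app_assoc. reflexivity.
    + rewrite Hx at 1. field.
    + field. lra.
  - exists (a + (b-a)/3), (a + (b-a)/2), (ya + m * ((b-a)/3)), (ya + m*((b-a)/2) + lam * (b-a) * s). split; [split; [lra|split]|].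
    + exists (r1 ++ [(a,ya)]), ((a + 2*(b-a)/3, ya + m * (2*(b-a)/3)) :: (b,yb) :: r).
      rewrite HN, <- app_assoc. reflexivity.
    + rewrite Hx at 1. field.
    + field. lra.
  - exists (a + (b-a)/3), (a + (b-a)/2), (ya + m * ((b-a)/3)), (ya + m*((b-a)/2) + lam * (b-a) * s). split; [split; [lra|split]|].
    + exists (r1 ++ [(a,ya)]), ((a + 2*(b-a)/3, ya + m * (2*(b-a)/3)) :: (b,yb) :: r).
      rewrite HN, <- app_assoc. reflexivity.
    + rewrite Hx at 1. field.
    + field. lra.
  - exists (a + (b-a)/2), (a + 2*(b-a)/3), (ya + m*((b-a)/2) + lam * (b-a) * s), (ya + m * (2*(b-a)/3)). split; [split; [lra|split]|].
    + exists (r1 ++ [(a,ya); (a + (b-a)/3, ya + m * ((b-a)/3))]), ((b,yb) :: r).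
      rewrite HN, <- app_assoc. reflexivity.
    + rewrite Hx at 1. field.
    + field. lra.
  - exists a, (a + (b-a)/3), ya, (ya + m * ((b-a)/3)). split; [split; [lra|split]|].
    + exists r1, ((a + (b-a)/2, ya + m*((b-a)/2) + lam * (b-a) * sqrt (1 + m^2)) :: (a + 2*(b-a)/3, ya + m * (2*(b-a)/3)) :: (b,yb) :: r).
      rewrite HN. reflexivity.
    + rewrite Hx at 1. field.
    + field. lra.
  - exists (a + 2*(b-a)/3), b, (ya + m * (2*(b-a)/3)), yb. split; [split; [lra|split]|].
    + exists (r1 ++ [(a,ya); (a + (b-a)/3, ya + m * ((b-a)/3)); (a + (b-a)/2, ya + m*((b-a)/2) + lam * (b-a) * sqrt (1 + m^2))]), r.
      rewrite HN, <- app_assoc. reflexivity.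
    + rewrite Hx at 1. field.
    + rewrite Hm. field. lra.
Qed.

Lemma deriv_inv lam x n a b ya yb o : Inv lam x n a b ya yb o ->
  0 < Nat.iter n T x < 1 -> slope lam n x = (yb - ya) / (b - a).
Proof.
  intros [Hab [[l1 [l2 Hl]] Hx]] Ht.
  set (t := Nat.iter n T x) in *.
  assert (Hax : a < x /\ x < b).
  { assert (0 < (b-a)*t < b - a) by (split; nra). destruct o; lra. }
  unfold slope.
  rewrite (Derive_ext_loc _ (fun y => ya + (yb - ya) / (b - a) * (y - a))).
  - apply is_derive_unique. auto_derive; auto. ring.
  - assert (He : 0 < Rmin (x - a) (b - x)) by (apply Rmin_glb_lt; lra).
    exists (mkposreal _ He). intros y Hy.
    change (Rabs (y - x) < Rmin (x - a) (b - x)) in Hy.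
    assert (Hy1 := Rmin_l (x - a) (b - x)). assert (Hy2 := Rmin_r (x - a) (b - x)).
    apply Rabs_def2 in Hy.
    unfold F. rewrite Hl.
    assert (Hs := nodes_sorted lam n). rewrite Hl in Hs.
    pose proof (sorted_prefix _ _ _ Hs) as Hp. simpl in Hp.
    rewrite interp_app; simpl; try lra.
    intros z Hz. specialize (Hp z Hz). lra.
Qed.

Lemma T_range t : 0 <= t <= 1 -> 0 <= T t <= 1.
Proof. intros. destruct (TU_cases t) as [[H1 [_ ->]]|[[H1 [_ ->]]|[[H1 [_ ->]]|[H1 [_ ->]]]]]; lra. Qed.

Lemma iter_range x n : 0 <= x <= 1 -> 0 <= Nat.iter n T x <= 1.
Proof. intros H. induction n; simpl; auto. apply T_range; auto. Qed.

Lemma iter_strict x n : 0 <= x <= 1 -> ~ inE x -> 0 < Nat.iter n T x < 1.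
Proof.
  intros H HE. destruct (iter_range x n H) as [H1 H2].
  assert (T0 : T 0 = 0) by (unfold T; destruct Rlt_dec; lra).
  assert (U0 : U 0 = 0%nat) by (unfold U; destruct Rlt_dec; auto; lra).
  assert (T1 : T 1 = 1) by (unfold T; repeat destruct Rlt_dec; lra).
  assert (U1 : U 1 = 3%nat) by (unfold U; repeat destruct Rlt_dec; auto; lra).
  split.
  - destruct H1 as [H1|H1]; auto. exfalso; apply HE. exists n, 0%nat. split; auto.
    intros k Hk. unfold u. replace (Nat.iter k T x) with 0; auto.
    induction Hk; auto. simpl. rewrite <- IHHk. auto.
  - destruct H2 as [H2|H2]; auto. exfalso; apply HE. exists n, 3%nat. split; auto.
    intros k Hk. unfold u. replace (Nat.iter k T x) with 1; auto.
    induction Hk; auto. simpl. rewrite <- IHHk. auto.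
Qed.

Lemma beta_mono i x k n : (k <= n)%nat -> (beta i x k <= beta i x n)%nat.
Proof. induction 1; auto. simpl. lia. Qed.

Lemma beta_hit i x k : u k x = i -> (1 <= beta i x (S k))%nat.
Proof. intros H. simpl. rewrite H, Nat.eqb_refl. lia. Qed.

Lemma sqrt_facts m : 0 <= sqrt (1 + m^2) /\ sqrt (1 + m^2) * sqrt (1 + m^2) = 1 + m^2.
Proof.
  split. apply sqrt_pos. apply sqrt_sqrt. nra.
Qed.


Lemma main_inv lam x p : 1/6 < lam < 5/6 ->
  beta12 x p = 0%nat -> beta12 x (S p) = 1%nat ->
  forall n, exists a b ya yb o, Inv lam x n a b ya yb o /\
    ((n <= p)%nat -> (yb - ya) / (b - a) = 0 /\ o = false) /\
    ((p + 1 <= n)%nat -> (o = false /\ 0 < (yb - ya) / (b - a)) \/ (o = true /\ (yb - ya) / (b - a) < 0)).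
Proof.
  intros Hl Hp HSp.
  assert (Hbef : forall k, (k < p)%nat -> u k x <> 1%nat /\ u k x <> 2%nat).
  { intros k Hk. unfold beta12 in Hp. split; intros Hu.
    - pose proof (beta_hit _ _ _ Hu). pose proof (beta_mono 1 x (S k) p Hk). lia.
    - pose proof (beta_hit _ _ _ Hu). pose proof (beta_mono 2 x (S k) p Hk). lia. }
  assert (Hat : u p x = 1%nat \/ u p x = 2%nat).
  { unfold beta12 in *. simpl in HSp.
    destruct (Nat.eqb_spec (u p x) 1); destruct (Nat.eqb_spec (u p x) 2); lia. }
  induction n.
  - exists 0, 1, 0, 0, false. split; [|split].
    + split; [lra|split]. exists [], []. reflexivity. simpl. ring.
    + intros _. split; auto. unfold Rdiv; ring.
    + intros H; lia.
  - destruct IHn as (a & b & ya & yb & o & HI & H1 & H2).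
    destruct (step lam x n a b ya yb o _ HI eq_refl) as (a' & b' & ya' & yb' & HI' & Hm').
    set (m := (yb - ya) / (b - a)) in *.
    destruct (sqrt_facts m) as [Hs1 Hs2].
    set (s := sqrt (1 + m^2)) in *.
    exists a', b', ya', yb', (newo (u n x) o). split; [auto|]. rewrite Hm'.
    destruct (Nat.lt_ge_cases n p) as [Hnp|Hnp].
    + destruct (H1 ltac:(lia)) as [-> ->]. destruct (Hbef n Hnp).
      split; [intros _|intros; lia].
      destruct (u n x) as [|[|[|d]]]; simpl; auto; lia.
    + split; [intros; lia|intros _].
      destruct (Nat.eq_dec n p) as [->|Hne].
      * destruct (H1 ltac:(lia)) as [Hm0 ->]. rewrite Hm0 in *.
        assert (0 < s) by nra.
        destruct Hat as [-> | ->]; simpl; [left|right]; split; auto; nra.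
      * assert (Hsm1 : m < s) by nra. assert (Hsm2 : - m < s) by nra.
        assert (Hs0 : s < 6 * lam * s) by nra.
        destruct (H2 ltac:(lia)) as [[-> Hm]|[-> Hm]];
        destruct (u n x) as [|[|[|d]]]; simpl; auto.
        all: try (left; split; auto; nra).
        all: try (right; split; auto; nra).
Qed.

Theorem lemma3p3 (lam x : R) (p : nat) :
  1/6 < lam < 5/6 ->
  0 <= x <= 1 -> ~ inE x ->
  beta12 x p = 0%nat -> beta12 x (S p) = 1%nat ->
  (forall k : nat, (k <= p)%nat -> slope lam k x = 0) /\
  (u p x = 1%nat -> slope lam (S p) x = 6 * lam) /\
  (u p x = 2%nat -> slope lam (S p) x = - (6 * lam)) /\
  (forall n : nat, (p + 1 <= n)%nat ->
     ((u n x = 0%nat \/ u n x = 3%nat) ->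
        slope lam (S n) x = slope lam n x) /\
     (u n x = 1%nat ->
        slope lam (S n) x =
          sgn (slope lam n x) *
          (Rabs (slope lam n x) + 6 * lam * sqrt (1 + (slope lam n x) ^ 2))) /\
     (u n x = 2%nat ->
        slope lam (S n) x =
          sgn (slope lam n x) *
          (Rabs (slope lam n x) - 6 * lam * sqrt (1 + (slope lam n x) ^ 2)))).
Proof.
  intros Hl Hx HE Hp HSp.
  pose proof (main_inv lam x p Hl Hp HSp) as MI.
  assert (SL : forall n, exists a b ya yb o, Inv lam x n a b ya yb o /\
    slope lam n x = (yb - ya) / (b - a) /\
    ((n <= p)%nat -> (yb - ya) / (b - a) = 0 /\ o = false) /\
    ((p + 1 <= n)%nat -> (o = false /\ 0 < (yb - ya) / (b - a)) \/ (o = true /\ (yb - ya) / (b - a) < 0))).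
  { intros n. destruct (MI n) as (a & b & ya & yb & o & HI & H1 & H2).
    exists a, b, ya, yb, o. split; [auto|split; [|auto]]. eapply deriv_inv; eauto. apply iter_strict; auto. }
  assert (ST : forall n a b ya yb o, Inv lam x n a b ya yb o ->
     slope lam (S n) x = newm lam (u n x) o ((yb - ya) / (b - a)) (sqrt (1 + ((yb - ya) / (b - a))^2))).
  { intros n a b ya yb o HI.
    destruct (step lam x n a b ya yb o _ HI eq_refl) as (a' & b' & ya' & yb' & HI' & Hm').
    rewrite <- Hm'. eapply deriv_inv; eauto. apply iter_strict; auto. }
  split; [|split; [|split]].
  - intros k Hk. destruct (SL k) as (a & b & ya & yb & o & HI & -> & H1 & _). apply H1; auto.
  - intros Hu. destruct (SL p) as (a & b & ya & yb & o & HI & _ & H1 & _).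
    rewrite (ST _ _ _ _ _ _ HI), Hu. destruct (H1 (le_n p)) as [-> ->]. simpl.
    replace (1 + 0 * (0 * 1)) with 1 by ring. rewrite sqrt_1. ring.
  - intros Hu. destruct (SL p) as (a & b & ya & yb & o & HI & _ & H1 & _).
    rewrite (ST _ _ _ _ _ _ HI), Hu. destruct (H1 (le_n p)) as [-> ->]. simpl.
    replace (1 + 0 * (0 * 1)) with 1 by ring. rewrite sqrt_1. ring.
  - intros n Hn. destruct (SL n) as (a & b & ya & yb & o & HI & Hsl & _ & H2).
    rewrite (ST _ _ _ _ _ _ HI), Hsl.
    set (m := (yb - ya) / (b - a)) in *.
    destruct (H2 Hn) as [[-> Hm]|[-> Hm]].
    + assert (sgn m = 1) by (unfold sgn; destruct Rlt_dec; lra).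
      rewrite H, Rabs_pos_eq by lra.
      repeat split; intros Hu; [destruct Hu as [Hu|Hu]|..]; rewrite Hu; simpl; ring.
    + assert (sgn m = -1) by (unfold sgn; repeat destruct Rlt_dec; lra).
      rewrite H, Rabs_left by lra.
      repeat split; intros Hu; [destruct Hu as [Hu|Hu]|..]; rewrite Hu; simpl; ring.
Qed.
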